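(* Let $D\subset\mathbb{R}^N$ be a bounded domain or $D=\mathbb{R}^N$. Suppose $g(t,x)$ is bounded and uniformly continuous in $(t,x)\in\mathbb{R}\times\bar D$ with $g(t,x)>0$ for all $(t,x)\in\mathbb{R}\times D$, and $f$ satisfies (A-$f$) in the context. Then for any fixed $x\in\bar D$, the ordinary differential equation $$u_t=g(t,x)+u\,f(t,x,u)$$ has at most one strictly positive bounded entire solution $u^*(t)$ (i.e. a solution defined for all $t\in\mathbb{R}$ with $\inf_{t\in\mathbb{R}}u^*(t)>0$ and $\sup_{t\in\mathbb{R}}u^*(t)<\infty$).
   Context: Assumption (A-$f$) (for $f:\mathbb{R}\times\bar D\times\mathbb{R}\to\mathbb{R}$): $f$ is $C^1$ in $u$; $f$ and $f_u$ are uniformly continuous and bounded on $\mathbb{R}\times\bar D\times E$ for every bounded $E\subset\mathbb{R}$; $f$ is (Bohr) almost periodic in $t$ uniformly with respect to $x\in\bar D$ and $u$ in bounded sets; when $D=\mathbb{R}^N$, $f$ is also almost periodic in $x$ uniformly with respect to $t$ and $u$ in bounded sets; there is $U>0$ with $f(t,x,u)+1<0$ for all $(t,x)$ and $u\ge U$; and $\sup_{t\in\mathbb{R},x\in\bar D}f_u(t,x,u)<0$ for each $u\ge0$. *)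

(* Defs.v *)
From HB Require Import structures.
From mathcomp Require Import all_boot all_order all_algebra.
From mathcomp Require Import all_classical all_reals all_analysis.
Set Implicit Arguments. Unset Strict Implicit. Unset Printing Implicit Defensive.
Import Order.TTheory GRing.Theory Num.Theory.
Import numFieldNormedType.Exports.
Local Open Scope classical_set_scope.
Local Open Scope ring_scope.

Definition bounded_domain_or_whole {R : realType} {N : nat} (D : set 'rV[R]_N) :=
  (D !=set0 /\ open D /\ connected D /\ exists M : R, forall x, D x -> `|x| <= M)
  \/ D = setT.

Definition bounded_realset {R : realType} (E : set R) :=
  exists M : R, forall u, E u -> `|u| <= M.

Definition rel_dense_R {R : realType} (S : set R) :=
  exists l : R, 0 < l /\ forall a : R, exists tau, S tau /\ a <= tau <= a + l.

Definition rel_dense_RN {R : realType} {N : nat} (S : set 'rV[R]_N) :=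
  exists l : R, 0 < l /\ forall a : 'rV[R]_N, exists tau, S tau /\ `|tau - a| <= l.

Definition unif_cont3 {R : realType} {N : nat} (h : R -> 'rV[R]_N -> R -> R)
  (A : set 'rV[R]_N) (E : set R) :=
  forall e : R, 0 < e -> exists d : R, 0 < d /\
    forall t1 t2 x1 x2 u1 u2, A x1 -> A x2 -> E u1 -> E u2 ->
      `|t1 - t2| < d -> `|x1 - x2| < d -> `|u1 - u2| < d ->
      `|h t1 x1 u1 - h t2 x2 u2| < e.

Definition bounded3 {R : realType} {N : nat} (h : R -> 'rV[R]_N -> R -> R)
  (A : set 'rV[R]_N) (E : set R) :=
  exists M : R, forall t x u, A x -> E u -> `|h t x u| <= M.

Definition unif_cont2 {R : realType} {N : nat} (g : R -> 'rV[R]_N -> R)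
  (A : set 'rV[R]_N) :=
  forall e : R, 0 < e -> exists d : R, 0 < d /\
    forall t1 t2 x1 x2, A x1 -> A x2 ->
      `|t1 - t2| < d -> `|x1 - x2| < d -> `|g t1 x1 - g t2 x2| < e.

Definition bounded2 {R : realType} {N : nat} (g : R -> 'rV[R]_N -> R)
  (A : set 'rV[R]_N) :=
  exists M : R, forall t x, A x -> `|g t x| <= M.

Definition ap_in_t {R : realType} {N : nat} (h : R -> 'rV[R]_N -> R -> R)
  (A : set 'rV[R]_N) (E : set R) :=
  forall e : R, 0 < e -> rel_dense_R
    [set tau | forall t x u, A x -> E u -> `|h (t + tau) x u - h t x u| < e].

Definition ap_in_x {R : realType} {N : nat} (h : R -> 'rV[R]_N -> R -> R)
  (E : set R) :=
  forall e : R, 0 < e -> rel_dense_RN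
    [set tau | forall t x u, E u -> `|h t (x + tau) u - h t x u| < e].

Definition f_u {R : realType} {N : nat} (f : R -> 'rV[R]_N -> R -> R) :=
  fun t x u => derive1 (f t x) u.

Definition assumption_Af {R : realType} {N : nat} (D : set 'rV[R]_N)
  (f : R -> 'rV[R]_N -> R -> R) :=
  (forall t x, closure D x ->
     (forall u, derivable (f t x) u 1) /\ continuous (f_u f t x)) /\
  (forall E : set R, bounded_realset E ->
     unif_cont3 f (closure D) E /\ bounded3 f (closure D) E /\
     unif_cont3 (f_u f) (closure D) E /\ bounded3 (f_u f) (closure D) E) /\
  (forall E : set R, bounded_realset E -> ap_in_t f (closure D) E) /\
  (D = setT -> forall E : set R, bounded_realset E -> ap_in_x f E) /\
  (exists U : R, 0 < U /\
     forall t x u, closure D x -> U <= u -> f t x u + 1 < 0) /\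
  (forall u : R, 0 <= u -> exists delta : R, 0 < delta /\
     forall t x, closure D x -> f_u f t x u <= - delta).

Definition entire_solution {R : realType} {N : nat} (g : R -> 'rV[R]_N -> R)
  (f : R -> 'rV[R]_N -> R -> R) (x : 'rV[R]_N) (u : R -> R) :=
  forall t : R, derivable u t 1 /\ derive1 u t = g t x + u t * f t x (u t).

Definition strictly_positive_bounded {R : realType} (u : R -> R) :=
  (exists m : R, 0 < m /\ forall t, m <= u t) /\
  (exists M : R, forall t, u t <= M).

(* Main.v *)
Require Import Defs.
From HB Require Import structures.
From mathcomp Require Import all_boot all_order all_algebra.
From mathcomp Require Import all_classical all_reals all_analysis.
From mathcomp Require Import ring lra.
Import Order.TTheory GRing.Theory Num.Theory.
Import numFieldNormedType.Exports.
Local Open Scope classical_set_scope.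
Local Open Scope ring_scope.

Lemma g_nonneg (R : realType) (N : nat) (D : set 'rV[R]_N)
  (g : R -> 'rV[R]_N -> R) :
  unif_cont2 g (closure D) -> (forall t x, D x -> 0 < g t x) ->
  forall t x, closure D x -> 0 <= g t x.
Proof.
move=> gc gpos t x Dx; rewrite leNgt; apply/negP => gneg.
have [d [d0 Hd]] := gc (- g t x) (ltac:(by rewrite oppr_gt0)).
have [y [Dy bxy]] := Dx (ball x d) (nbhsx_ballx x d d0).
have := Hd t t x y Dx (subset_closure Dy).
rewrite subrr normr0 => /(_ d0).
move: bxy; rewrite -ball_normE /= => /[swap] /[apply].
have := gpos t y Dy.
move=> gy /ltr_normlP [+ _]; lra.
Qed.

Lemma endpoint_lt (R : realType) (f : R -> R) (a c : R) :
  derivable f c 1 -> 'D_1 f c < 0 -> a < c ->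
  exists t, a < t < c /\ f c < f t.
Proof.
move=> df dlt ac.
have cv : (fun h : R => h^-1 *: ((f \o shift c) (h *: 1) - f c)) @ 0^' --> 'D_1 f c
  by exact: df.
have := @cvgr_lt _ _ _ _ _ _ cv 0 dlt; rewrite near_withinE => /(_ (dnbhs_filter _)) /nbhs_ballP [e /= e0 He].
pose h := - (Order.min e (c - a) / 2).
have m0 : 0 < Order.min e (c - a) by rewrite lt_min e0 subr_gt0.
have hle : Order.min e (c - a) <= e by rewrite ge_min lexx.
have hle2 : Order.min e (c - a) <= c - a by rewrite ge_min lexx orbT.
have hb : ball (0:R) e h.
  rewrite -ball_normE /= sub0r /h opprK ger0_norm; last by rewrite divr_ge0 // ltW.
  lra.
have hn0 : h != 0 by rewrite /h oppr_eq0; apply: lt0r_neq0; rewrite divr_gt0.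
have hneg : h < 0 by rewrite /h oppr_lt0 divr_gt0.
have := He h hb hn0; rewrite /= -[h%:A]/(h * 1) mulr1 -[_ *: _]/(_ * _).
rewrite nmulr_rlt0 ?invr_lt0 // subr_gt0 => H.
exists (h + c); split => //; rewrite /h; apply/andP; split; lra.
Qed.

Lemma F_decr (R : realType) (F : R -> R) :
  (forall u, derivable F u 1) -> (forall u, 0 < u -> F^`()%classic u < 0) ->
  forall a b, 0 <= a -> a < b -> F b < F a.
Proof.
move=> dF neg a b a0 ab.
have [c cab] := @MVT R F F^`()%classic a b ab
  (fun u _ => ltac:(rewrite derive1E; exact: derivableP))
  (derivable_within_continuous (fun u _ => dF u)).
move/eqP; rewrite subr_eq => /eqP ->.
have c0 : 0 < c by move: cab; rewrite in_itv /= => /andP [? _]; lra.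

rewrite -subr_lt0 addrK pmulr_llt0 ?subr_gt0 //.
exact: neg.
Qed.

Lemma F_wdecr (R : realType) (F : R -> R) :
  (forall u, derivable F u 1) -> (forall u, 0 < u -> F^`()%classic u < 0) ->
  forall a b, 0 <= a -> a <= b -> F b <= F a.
Proof.
move=> dF neg a b a0; rewrite le_eqVlt => /orP [/eqP -> //| ab].
exact/ltW/F_decr.
Qed.

Lemma pair_gap (R : realType) (N : nat) (f : R -> 'rV[R]_N -> R -> R)
  (A : set 'rV[R]_N) (x : 'rV[R]_N) : A x ->
  (forall t, forall u, derivable (f t x) u 1) ->
  (forall u, 0 <= u -> exists delta, 0 < delta /\
       forall t y, A y -> f_u f t y u <= - delta) ->
  (forall E, bounded_realset E -> unif_cont3 (f_u f) A E) ->
  forall q1 q2, 0 <= q1 -> q1 < q2 ->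
  exists eta, 0 < eta /\ forall t, f t x q2 <= f t x q1 - eta.
Proof.
move=> Ax dF hneg huc q1 q2 q10 q12.
have [del [del0 Hdel]] := hneg q1 q10.
have bE : bounded_realset [set u : R | `|u| <= q2] by exists q2.
have [d [d0 Hd]] := huc _ bE (del / 2) (ltac:(by rewrite divr_gt0)).
pose s := Order.min (d / 2) (q2 - q1).
have s0 : 0 < s by rewrite lt_min subr_gt0 q12 divr_gt0.
have sd : s <= d / 2 by rewrite ge_min lexx.
have sq : s <= q2 - q1 by rewrite ge_min lexx orbT.
exists (del / 2 * s); split; first by rewrite mulr_gt0 // divr_gt0.
move=> t.
have Fneg : forall u, 0 < u -> (f t x)^`()%classic u < 0.
  move=> u u0; have [de [de0 Hde]] := hneg u (ltW u0).
  have := Hde t x Ax; rewrite /f_u; lra.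
have lt1 : q1 < q1 + s by lra.
have [c cab] := @MVT R (f t x) (f t x)^`()%classic q1 (q1 + s) lt1
  (fun u _ => ltac:(rewrite derive1E; exact: derivableP))
  (derivable_within_continuous (fun u _ => dF t u)).
move: cab; rewrite in_itv /= => /andP [c1 c2] Hmvt.
have Hc : `|f_u f t x c - f_u f t x q1| < del / 2.
  apply: Hd => //=.
  - rewrite ger0_norm; lra.
  - rewrite ger0_norm; lra.
  - by rewrite subrr normr0.
  - by rewrite subrr normr0.
  - rewrite ger0_norm; lra.
have Hq1 := Hdel t x Ax.
have fc : (f t x)^`()%classic c <= - (del / 2).
  move: Hc Hq1; rewrite /f_u => /ltr_normlP [H1 H2] Hq1; lra.
have step : f t x (q1 + s) <= f t x q1 - del / 2 * s.
  have : f t x (q1 + s) - f t x q1 <= - (del / 2) * s.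
    by rewrite Hmvt addrAC subrr add0r; apply: ler_wpM2r; lra.
  lra.
have mono : f t x q2 <= f t x (q1 + s).
  apply: (@F_wdecr R (f t x) (dF t) Fneg (q1 + s) q2); lra.
lra.
Qed.

Lemma grid_gap (R : realType) (F : R -> R -> R) (m h : R) :
  (forall q1 q2, 0 <= q1 -> q1 < q2 ->
     exists eta, 0 < eta /\ forall t, F t q2 <= F t q1 - eta) ->
  (forall t a b, 0 <= a -> a <= b -> F t b <= F t a) ->
  0 < m -> 0 < h ->
  forall n : nat, exists eta, 0 < eta /\ forall t b a,
    m <= b -> b < m + n%:R * h -> b + 2 * h <= a -> F t a <= F t b - eta.
Proof.
move=> pg mono m0 h0; elim=> [|n [eta [eta0 IH]]].
  exists 1; split => // t b a mb; rewrite mul0r addr0; lra.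
have q0 : 0 <= m + n.+1%:R * h by apply: addr_ge0; [lra|apply: mulr_ge0; [exact: ler0n|lra]].
have [eta' [eta0' H']] := pg (m + n.+1%:R * h) (m + n.+2%:R * h) q0
  (ltac:(rewrite ltrD2l ltr_pM2r // ltr_nat; done)).
exists (Order.min eta eta'); split; first by rewrite lt_min eta0 eta0'.
have e1 : Order.min eta eta' <= eta by rewrite ge_min lexx.
have e2 : Order.min eta eta' <= eta' by rewrite ge_min lexx orbT.
move=> t b a mb bn ba.
have [bs|bl] := ltP b (m + n%:R * h).
  have := IH t b a mb bs ba; lra.
have En1 : n.+1%:R * h = n%:R * h + h by rewrite -addn1 natrD mulrDl mul1r.
have En2 : n.+2%:R * h = n%:R * h + 2 * h by rewrite -addn2 natrD mulrDl.
have h1 := H' t.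
have h2 : F t a <= F t (m + n.+2%:R * h) by apply: mono; lra.
have h3 : F t (m + n.+1%:R * h) <= F t b by apply: mono; lra.
lra.
Qed.

Lemma main_key (R : realType) (N : nat) (D : set 'rV[R]_N)
  (g : R -> 'rV[R]_N -> R) (f : R -> 'rV[R]_N -> R -> R) (x : 'rV[R]_N) :
  (forall t, 0 <= g t x) ->
  (forall t u, derivable (f t x) u 1) ->
  (forall t u, 0 < u -> (f t x)^`()%classic u < 0) ->
  (forall q1 q2, 0 <= q1 -> q1 < q2 ->
     exists eta, 0 < eta /\ forall t, f t x q2 <= f t x q1 - eta) ->
  forall v1 v2 : R -> R,
    entire_solution g f x v1 -> strictly_positive_bounded v1 ->
    entire_solution g f x v2 -> strictly_positive_bounded v2 ->
    forall t0, v2 t0 < v1 t0 -> False.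
Proof.
move=> gx dF Fneg pg v1 v2 s1 [[m1 [m10 Hm1]] [M1 HM1]] s2 [[m2 [m20 Hm2]] [M2 HM2]] t0 lt0.
have v2pos t : 0 < v2 t by apply: lt_le_trans (Hm2 t).
have v1pos t : 0 < v1 t by apply: lt_le_trans (Hm1 t).
have mono t a b : 0 <= a -> a <= b -> f t x b <= f t x a.
  by move=> a0 ab; apply: (@F_wdecr R (f t x) (dF t) (Fneg t)).
have strict t a b : 0 <= a -> a < b -> f t x b < f t x a.
  by move=> a0 ab; apply: (@F_decr R (f t x) (dF t) (Fneg t)).
pose r := fun t => v1 t / v2 t.
pose rd := fun t => v1 t * (- (v2 t) ^- 2 * (g t x + v2 t * f t x (v2 t)))
   + (v2 t)^-1 * (g t x + v1 t * f t x (v1 t)).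
have dr (t : R) : is_derive t 1 r (rd t).
  have d1 : is_derive t 1 v1 (g t x + v1 t * f t x (v1 t)).
    have [h1 h2] := s1 t; rewrite -h2 derive1E; exact: derivableP.
  have d2 : is_derive t 1 v2 (g t x + v2 t * f t x (v2 t)).
    have [h1 h2] := s2 t; rewrite -h2 derive1E; exact: derivableP.
  have d2V := is_deriveV (lt0r_neq0 (v2pos t)) d2.
  exact: (is_deriveM d1 d2V).
have rd_eq (t : R) : rd t = (v2 t)^-1 * g t x * ((v2 t)^-1 * (v2 t - v1 t))
    + v1 t * (v2 t)^-1 * (f t x (v1 t) - f t x (v2 t)).
  rewrite /rd; have := lt0r_neq0 (v2pos t); move: (v2 t) => w w0; field.
  exact: w0.
have rd_le (t : R) : v2 t <= v1 t ->
    rd t <= v1 t * (v2 t)^-1 * (f t x (v1 t) - f t x (v2 t)).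
  move=> le; rewrite rd_eq gerDr; apply: mulr_ge0_le0.
    by apply: mulr_ge0 => //; rewrite invr_ge0 ltW.
  by apply: mulr_ge0_le0; [rewrite invr_ge0 ltW | rewrite subr_le0].
have rd_neg (t : R) : v2 t < v1 t -> rd t < 0.
  move=> lt; apply: (le_lt_trans (rd_le t (ltW lt))).
  rewrite pmulr_rlt0; last by rewrite mulr_gt0 // invr_gt0.
  by rewrite subr_lt0; apply: strict => //; apply: ltW.
have r_gt1 (t : R) : (1 < r t) = (v2 t < v1 t).
  by rewrite /r ltr_pdivlMr // mul1r.
have rder (t : R) : derivable r t 1 by case: (dr t).
have rD (t : R) : 'D_1 r t = rd t by case: (dr t).
have rcont (a b : R) : {within `[a, b], continuous r}.
  exact: derivable_within_continuous (fun u _ => rder u).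
have barrier : forall s, s <= t0 -> r t0 <= r s.
  move=> s; rewrite le_eqVlt => /orP [/eqP -> //| st0].
  rewrite leNgt; apply/negP => rlt.
  have [p pin pmax] := EVT_max (ltW st0) (rcont s t0).
  have rp1 : 1 < r p.
    apply: lt_le_trans (pmax t0 _); first by rewrite r_gt1.
    by rewrite in_itv /= lexx andbT ltW.
  move: pin; rewrite in_itv /= => /andP [sp pt].
  move: sp; rewrite le_eqVlt => /orP [/eqP sp | sp].
    have := pmax t0; rewrite -sp in_itv /= lexx (ltW st0) => /(_ isT); lra.
  move: pt; rewrite le_eqVlt => /orP [/eqP pt | pt].
    subst p.
    have [t [/andP [st tt0] rt]] := @endpoint_lt R r s t0 (rder t0)
      (ltac:(rewrite rD; apply: rd_neg; by rewrite -r_gt1)) st0.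
    have := pmax t; rewrite in_itv /= (ltW st) (ltW tt0) => /(_ isT); lra.
  have pin : p \in `]s, t0[ by rewrite in_itv /= sp pt.
  have := @derive1_at_max R r s t0 p (ltW st0) (fun u _ => rder u) pin
    (fun u uin => pmax u (ltac:(move: uin; rewrite !in_itv /= => /andP [? ?];
                                 apply/andP; split; exact: ltW))).
  move=> /(@derive_val _ _ _ _ _ _ _); rewrite rD => rd0.
  have := rd_neg p; rewrite -r_gt1 rd0 => /(_ rp1); rewrite ltxx.
  done.
pose rho := r t0.
have rho1 : 1 < rho by rewrite /rho r_gt1.
pose h := (rho - 1) * m2 / 2.
have h0 : 0 < h by rewrite /h divr_gt0 // mulr_gt0 // subr_gt0.
have gap s : s <= t0 -> v2 s + 2 * h <= v1 s.
  move=> st; have := barrier s st; rewrite /rho /r ler_pdivlMr // => H.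
  have := Hm2 s => Hm.
  have : 0 <= (v1 t0 / v2 t0 - 1) * (v2 s - m2).
    by apply: mulr_ge0; [move: rho1; rewrite /rho /r; lra | lra].
  rewrite /h; move: rho1 H; rewrite /rho /r. lra.
pose n := Num.Def.archi_bound ((M2 - m2) / h).
have Mm : m2 <= M2 by apply: le_trans (Hm2 0) (HM2 0).
have nb : M2 < m2 + n%:R * h.
  have := @archi_boundP R ((M2 - m2) / h) (ltac:(apply: divr_ge0; lra)).
  rewrite -/n ltr_pdivrMr //; lra.
have [eta [eta0 Heta]] := @grid_gap R (fun t u => f t x u) m2 h pg mono m20 h0 n.
have rdle s : s <= t0 -> rd s <= - eta.
  move=> st; have g2 := gap s st.
  have H1 := Heta s (v2 s) (v1 s) (Hm2 s) (le_lt_trans (HM2 s) nb) g2.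
  have H2 := rd_le s (ltac:(lra)).
  have H3 := barrier s st.
  have : 0 <= (v1 s / v2 s - 1) * (f s x (v2 s) - f s x (v1 s)).
    apply: mulr_ge0; last lra.
    move: rho1 H3; rewrite /rho /r; lra.
  move: H2; lra.
pose T := M1 / (m2 * eta) + 1.
have T0 : 0 < T.
  rewrite /T; have : 0 <= M1 / (m2 * eta).
    apply: divr_ge0; [exact: le_trans (ltW m10) (le_trans (Hm1 0) (HM1 0))|].
    by apply: mulr_ge0; apply: ltW.
  lra.
have aT : t0 - T < t0 by lra.
have [c cin Hc] := @MVT R r rd (t0 - T) t0 aT (fun u _ => dr u) (rcont _ _).
move: cin; rewrite in_itv /= => /andP [c1 c2].
have Hrc := rdle c (ltW c2).
have : r t0 - r (t0 - T) <= - eta * T.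
  have eT : t0 - (t0 - T) = T by lra.
  by rewrite Hc eT; apply: ler_wpM2r; lra.
have rt0 : 0 < r t0 by rewrite /r divr_gt0.
have Hra : r (t0 - T) * m2 <= M1.
  apply: le_trans (HM1 (t0 - T)).
  have -> : v1 (t0 - T) = r (t0 - T) * v2 (t0 - T).
    by rewrite /r divfK // lt0r_neq0.
  apply: ler_wpM2l; last exact: Hm2.
  by rewrite /r ltW // divr_gt0.
have ETm : eta * T * m2 = M1 + eta * m2.
  rewrite /T; field; apply/andP; split; apply: lt0r_neq0 => //.
move=> H.
have : (r t0 + eta * T) * m2 <= r (t0 - T) * m2.
  by apply: ler_wpM2r; lra.
have : 0 < r t0 * m2 by rewrite mulr_gt0.
have : 0 < eta * m2 by rewrite mulr_gt0.
lra.
Qed.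

Theorem lemma3p1 (R : realType) (N : nat) (D : set 'rV[R]_N)
  (g : R -> 'rV[R]_N -> R) (f : R -> 'rV[R]_N -> R -> R) :
  (0 < N)%N ->
  bounded_domain_or_whole D ->
  unif_cont2 g (closure D) -> bounded2 g (closure D) ->
  (forall t x, D x -> 0 < g t x) ->
  assumption_Af D f ->
  forall x : 'rV[R]_N, closure D x ->
  forall u1 u2 : R -> R,
    entire_solution g f x u1 -> strictly_positive_bounded u1 ->
    entire_solution g f x u2 -> strictly_positive_bounded u2 ->
    u1 = u2.
Proof.
move=> _ _ gc _ gpos [Hc1 [Hbd [_ [_ [_ Hneg]]]]] x Dx u1 u2 s1 p1 s2 p2.
have gx t : 0 <= g t x. have := @g_nonneg R N D g gc gpos t x Dx. exact.
have dF t u : derivable (f t x) u 1 by exact: ((Hc1 t x Dx).1 u).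
have Fneg t u : 0 < u -> (f t x)^`()%classic u < 0.
  move=> u0; have [de [de0 Hde]] := Hneg u (ltW u0).
  have := Hde t x Dx; rewrite /f_u; lra.
have pg := @pair_gap R N f (closure D) x Dx dF Hneg
  (fun E bE => (Hbd E bE).2.2.1).
apply/funext => t.
case: (ltgtP (u1 t) (u2 t)) => // H.
  by case: (@main_key R N D g f x gx dF Fneg pg u2 u1 s2 p2 s1 p1 t H).
by case: (@main_key R N D g f x gx dF Fneg pg u1 u2 s1 p1 s2 p2 t H).
Qed.
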